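(* For every $n\in\mathbb N$, the relation $\to_n$ (reduction at depth $n$), restricted to terms of $\ell\Lambda_\infty^{4S}$, is strongly normalising: there is no infinite sequence $M_0\to_n M_1\to_n M_2\to_n\cdots$ with $M_0$ a term of $\ell\Lambda_\infty^{4S}$.
   Context: Preterms: possibly infinite trees generated by $M ::= x \mid MN \mid \lambda x.M \mid \lambda^{\downarrow}x.M \mid \lambda^{\uparrow}x.M \mid \downarrow M \mid \uparrow M$ ($\downarrow M$ inductive box, $\uparrow M$ coinductive box); substitution is capture-avoiding. Patterns: $x,\downarrow x,\uparrow x,\#x,\dagger x$; environments: finite sets of patterns, each variable in at most one; $\Theta,\Xi,\Psi,\Phi$ linear environments (sets of variables) with marked versions $\#\Theta$ etc.; $\Upsilon,\Pi$ environments with only patterns $y$, $\downarrow y$; commas are disjoint unions. A term of $\ell\Lambda_\infty^{4S}$ is a preterm $M$ with $\Gamma\vdash M$ derivable for some $\Gamma$ by: (vl) $\#\Theta,\uparrow\Xi,\dagger\Psi,x\vdash x$; (vd) $\#\Theta,\uparrow\Xi,\dagger\Psi,\#x\vdash x$; (va) $\#\Theta,\uparrow\Xi,\dagger\Psi,\dagger x\vdash x$; (a) from $\Upsilon,\#\Theta,\uparrow\Xi,\dagger\Psi\vdash M$ and $\Pi,\#\Theta,\uparrow\Xi,\dagger\Psi\vdash N$ infer $\Upsilon,\Pi,\#\Theta,\uparrow\Xi,\dagger\Psi\vdash MN$; (ll) $\Gamma,x\vdash M$ gives $\Gamma\vdash\lambda x.M$; (li)$_1$ $\Gamma,\#x\vdash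 M$ gives $\Gamma\vdash\lambda^\downarrow x.M$; (li)$_2$ $\Gamma,\downarrow x\vdash M$ gives $\Gamma\vdash\lambda^\downarrow x.M$; (lc) $\Gamma,\uparrow x\vdash M$ gives $\Gamma\vdash\lambda^\uparrow x.M$; (mi) from $\Xi,\uparrow\Psi,\dagger\Phi\vdash M$ infer $\#\Theta,\downarrow\Xi,\uparrow\Psi,\dagger\Phi\vdash\downarrow M$; (mc) from $\dagger\Xi,\dagger\Psi\vdash M$ infer $\#\Theta,\uparrow\Xi,\dagger\Psi\vdash\uparrow M$; (mc) coinductive, others inductive (every infinite branch of a derivation contains infinitely many (mc)). Basic reduction: $(\lambda x.M)N\mapsto M[N/x]$, $(\lambda^\downarrow x.M)(\downarrow N)\mapsto M[N/x]$, $(\lambda^\uparrow x.M)(\uparrow N)\mapsto M[N/x]$; $M\to_n N$ iff $M=C[L]$, $N=C[P]$, $L\mapsto P$, where $C$ is a one-hole context whose hole lies inside exactly $n$ coinductive boxes $\uparrow(\cdot)$ (and any number of inductive boxes). *)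

(* Defs.v *)
From Stdlib Require Import List Arith.
Import ListNotations.

CoInductive term : Type :=
| Var  : nat -> term
| App  : term -> term -> term
| Lam  : term -> term
| LamI : term -> term          (* \^{down} x.M *)
| LamC : term -> term          (* \^{up} x.M   *)
| BoxI : term -> term          (* inductive box   (down M) *)
| BoxC : term -> term.         (* coinductive box (up M)   *)

CoInductive bisim : term -> term -> Prop :=
| bs_var n : bisim (Var n) (Var n)
| bs_app M M' N N' : bisim M M' -> bisim N N' -> bisim (App M N) (App M' N')
| bs_lam M M' : bisim M M' -> bisim (Lam M) (Lam M')
| bs_lamI M M' : bisim M M' -> bisim (LamI M) (LamI M')
| bs_lamC M M' : bisim M M' -> bisim (LamC M) (LamC M')
| bs_boxI M M' : bisim M M' -> bisim (BoxI M) (BoxI M')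
| bs_boxC M M' : bisim M M' -> bisim (BoxC M) (BoxC M').

CoFixpoint lift (k : nat) (M : term) : term :=
  match M with
  | Var n => Var (if n <? k then n else S n)
  | App M1 M2 => App (lift k M1) (lift k M2)
  | Lam M1 => Lam (lift (S k) M1)
  | LamI M1 => LamI (lift (S k) M1)
  | LamC M1 => LamC (lift (S k) M1)
  | BoxI M1 => BoxI (lift k M1)
  | BoxC M1 => BoxC (lift k M1)
  end.

Fixpoint liftn (j : nat) (M : term) : term :=
  match j with 0 => M | S j' => lift 0 (liftn j' M) end.

CoFixpoint subst (k : nat) (N : term) (M : term) : term :=
  match M with
  | Var n => if n <? k then Var n else if n =? k then liftn k N else Var (pred n)
  | App M1 M2 => App (subst k N M1) (subst k N M2)
  | Lam M1 => Lam (subst (S k) N M1)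
  | LamI M1 => LamI (subst (S k) N M1)
  | LamC M1 => LamC (subst (S k) N M1)
  | BoxI M1 => BoxI (subst k N M1)
  | BoxC M1 => BoxC (subst k N M1)
  end.

(** [step n M N] : M ->_n N, i.e. contraction of a basic redex under a
    one-hole context whose hole lies inside exactly n coinductive boxes.
    Results are taken up to bisimilarity. *)
Inductive step : nat -> term -> term -> Prop :=
| st_beta M N P : bisim P (subst 0 N M) -> step 0 (App (Lam M) N) P
| st_betaI M N P : bisim P (subst 0 N M) -> step 0 (App (LamI M) (BoxI N)) P
| st_betaC M N P : bisim P (subst 0 N M) -> step 0 (App (LamC M) (BoxC N)) P
| st_appL n M M' N N' : step n M M' -> bisim N N' -> step n (App M N) (App M' N')
| st_appR n M M' N N' : bisim M M' -> step n N N' -> step n (App M N) (App M' N')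
| st_lam n M M' : step n M M' -> step n (Lam M) (Lam M')
| st_lamI n M M' : step n M M' -> step n (LamI M) (LamI M')
| st_lamC n M M' : step n M M' -> step n (LamC M) (LamC M')
| st_boxI n M M' : step n M M' -> step n (BoxI M) (BoxI M')
| st_boxC n M M' : step n M M' -> step (S n) (BoxC M) (BoxC M').

(** Patterns: x, down x, up x, #x, dagger x. *)
Inductive kind : Type := KLin | KInd | KCoind | KHash | KDag.

(** Environments: finite partial maps from de Bruijn indices to pattern kinds
    (each variable carries at most one pattern). *)
Definition env := list (option kind).
Definition get (G : env) (i : nat) : option kind := nth i G None.

(** Entries allowed in the shared part  #Theta, up Xi, dagger Psi. *)
Definition shared (o : option kind) : Prop :=
  o = None \/ o = Some KHash \/ o = Some KCoind \/ o = Some KDag.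

(** G = G1 "+" G2 as in rule (a): linear/inductive patterns (Upsilon, Pi) are
    split disjointly, #, up, dagger patterns are shared. *)
Definition split_opt (o o1 o2 : option kind) : Prop :=
  match o with
  | None => o1 = None /\ o2 = None
  | Some KLin | Some KInd => (o1 = o /\ o2 = None) \/ (o1 = None /\ o2 = o)
  | Some _ => o1 = o /\ o2 = o
  end.
Definition split_env (G G1 G2 : env) : Prop :=
  forall i, split_opt (get G i) (get G1 i) (get G2 i).

(** Premise environment of (mi): #Theta dropped, down Xi becomes Xi. *)
Definition boxI_entry (o : option kind) : option kind :=
  match o with
  | Some KHash => None
  | Some KInd => Some KLin
  | _ => o
  end.
(** Premise environment of (mc): #Theta dropped, up Xi becomes dagger Xi. *)
Definition boxC_entry (o : option kind) : option kind :=
  match o with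
  | Some KHash => None
  | Some KCoind => Some KDag
  | _ => o
  end.

(** Inductive layer of the typing system; [R] stands for the coinductive
    hypothesis, used only by the premise of rule (mc). *)
Inductive der_ind (R : env -> term -> Prop) : env -> term -> Prop :=
| d_var G x :
    (get G x = Some KLin \/ get G x = Some KHash \/ get G x = Some KDag) ->
    (forall y, y <> x -> shared (get G y)) ->
    der_ind R G (Var x)
| d_app G G1 G2 M N :
    split_env G G1 G2 -> der_ind R G1 M -> der_ind R G2 N ->
    der_ind R G (App M N)                                (* (a) *)
| d_lam G M : der_ind R (Some KLin :: G) M -> der_ind R G (Lam M)
| d_lamI1 G M : der_ind R (Some KHash :: G) M -> der_ind R G (LamI M)
| d_lamI2 G M : der_ind R (Some KInd :: G) M -> der_ind R G (LamI M)
| d_lamC G M : der_ind R (Some KCoind :: G) M -> der_ind R G (LamC M)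
| d_boxI G M :
    (forall i, get G i <> Some KLin) ->
    der_ind R (map boxI_entry G) M -> der_ind R G (BoxI M)             (* (mi) *)
| d_boxC G M :
    (forall i, shared (get G i)) ->
    R (map boxC_entry G) M -> der_ind R G (BoxC M).                     (* (mc) *)

(** Derivability: greatest fixed point over the least fixed point, i.e.
    every infinite branch of a derivation passes infinitely many (mc). *)
CoInductive der : env -> term -> Prop :=
| der_fold G M : der_ind der G M -> der G M.

Definition is_term (M : term) : Prop := exists G, der G M.

(* Main.v *)
Require Import Defs.
From Stdlib Require Import List Arith Lia Permutation.
Import ListNotations.

Inductive fterm : Type :=
| FVar : nat -> fterm
| FApp : fterm -> fterm -> fterm
| FLam : fterm -> fterm
| FLamI : fterm -> fterm
| FLamC : fterm -> fterm
| FBoxI : fterm -> fterm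
| FBoxC : fterm -> fterm
| FCut : fterm.

Fixpoint flift (k:nat) (t:fterm) : fterm := match t with
 | FVar n => FVar (if n <? k then n else S n)
 | FApp a b => FApp (flift k a) (flift k b)
 | FLam a => FLam (flift (S k) a)
 | FLamI a => FLamI (flift (S k) a)
 | FLamC a => FLamC (flift (S k) a)
 | FBoxI a => FBoxI (flift k a)
 | FBoxC a => FBoxC (flift k a)
 | FCut => FCut end.
Fixpoint fliftn (j:nat) (t:fterm) : fterm :=
  match j with 0 => t | S j' => flift 0 (fliftn j' t) end.
Fixpoint fsubst (k:nat) (b:fterm) (t:fterm) : fterm := match t with
 | FVar n => if n <? k then FVar n else if n =? k then fliftn k b else FVar (pred n)
 | FApp a1 a2 => FApp (fsubst k b a1) (fsubst k b a2)
 | FLam a => FLam (fsubst (S k) b a)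
 | FLamI a => FLamI (fsubst (S k) b a)
 | FLamC a => FLamC (fsubst (S k) b a)
 | FBoxI a => FBoxI (fsubst k b a)
 | FBoxC a => FBoxC (fsubst k b a)
 | FCut => FCut end.

Definition shI (p:nat*nat) : nat*nat := (S (fst p), snd p).
Definition shC (p:nat*nat) : nat*nat := (fst p, S (snd p)).
Definition padd (p q:nat*nat) : nat*nat := (fst p + fst q, snd p + snd q).

Fixpoint occs (i:nat) (t:fterm) : list (nat*nat) := match t with
 | FVar n => if n =? i then [(0,0)] else []
 | FApp a b => occs i a ++ occs i b
 | FLam a => occs (S i) a
 | FLamI a => occs (S i) a
 | FLamC a => occs (S i) a
 | FBoxI a => map shI (occs i a)
 | FBoxC a => map shC (occs i a)
 | FCut => [] end.

Definition okLin (L : list (nat*nat)) := length L <= 1 /\ Forall (fun p => p = (0,0)) L.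
Definition okHash (L : list (nat*nat)) := Forall (fun p => p = (0,0)) L.
Definition okInd (L : list (nat*nat)) := length L <= 1 /\ Forall (fun p => p = (1,0)) L.
Definition okC (L : list (nat*nat)) := Forall (fun p => 1 <= snd p) L.

Fixpoint inv (t:fterm) : Prop := match t with
 | FVar _ => True
 | FCut => True
 | FApp a b => inv a /\ inv b
 | FLam a => okLin (occs 0 a) /\ inv a
 | FLamI a => (okHash (occs 0 a) \/ okInd (occs 0 a)) /\ inv a
 | FLamC a => okC (occs 0 a) /\ inv a
 | FBoxI a => inv a
 | FBoxC a => inv a end.

Fixpoint lv (t:fterm) : list nat := match t with
 | FVar _ => [0]
 | FCut => [0]
 | FApp a b => 0 :: lv a ++ lv b
 | FLam a => 0 :: lv a
 | FLamI a => 0 :: lv a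
 | FLamC a => 0 :: lv a
 | FBoxC a => 0 :: lv a
 | FBoxI a => 0 :: map S (lv a) end.
Fixpoint lvx (k:nat) (t:fterm) : list nat := match t with
 | FVar n => if n =? k then [] else [0]
 | FCut => [0]
 | FApp a b => 0 :: lvx k a ++ lvx k b
 | FLam a => 0 :: lvx (S k) a
 | FLamI a => 0 :: lvx (S k) a
 | FLamC a => 0 :: lvx (S k) a
 | FBoxC a => 0 :: lvx k a
 | FBoxI a => 0 :: map S (lvx k a) end.

Inductive fstep : fterm -> fterm -> Prop :=
| fs_beta a b : fstep (FApp (FLam a) b) (fsubst 0 b a)
| fs_betaI a b : fstep (FApp (FLamI a) (FBoxI b)) (fsubst 0 b a)
| fs_betaC a : fstep (FApp (FLamC a) FCut) (fsubst 0 FCut a)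
| fs_appL a a' b : fstep a a' -> fstep (FApp a b) (FApp a' b)
| fs_appR a b b' : fstep b b' -> fstep (FApp a b) (FApp a b')
| fs_lam a a' : fstep a a' -> fstep (FLam a) (FLam a')
| fs_lamI a a' : fstep a a' -> fstep (FLamI a) (FLamI a')
| fs_lamC a a' : fstep a a' -> fstep (FLamC a) (FLamC a')
| fs_boxI a a' : fstep a a' -> fstep (FBoxI a) (FBoxI a')
| fs_boxC a a' : fstep a a' -> fstep (FBoxC a) (FBoxC a').

Lemma occs_flift_lt : forall t k i, i < k -> occs i (flift k t) = occs i t.
Proof.
  induction t; intros k i H; simpl; try (rewrite ?IHt, ?IHt1, ?IHt2 by lia); auto.
  destruct (n <? k) eqn:E; auto.
  apply Nat.ltb_ge in E.
  destruct (n =? i) eqn:E1; destruct (S n =? i) eqn:E2; auto;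
  apply Nat.eqb_eq in E1 || apply Nat.eqb_eq in E2; lia.
Qed.

Lemma occs_flift_eq : forall t k, occs k (flift k t) = [].
Proof.
  induction t; intros k; simpl; rewrite ?IHt, ?IHt1, ?IHt2; auto.
  destruct (n <? k) eqn:E.
  - apply Nat.ltb_lt in E. destruct (n =? k) eqn:E1; auto. apply Nat.eqb_eq in E1; lia.
  - apply Nat.ltb_ge in E. destruct (S n =? k) eqn:E1; auto. apply Nat.eqb_eq in E1; lia.
Qed.

Lemma occs_flift_ge : forall t k i, k <= i -> occs (S i) (flift k t) = occs i t.
Proof.
  induction t; intros k i H; simpl; try (rewrite ?IHt, ?IHt1, ?IHt2 by lia); auto.
  destruct (n <? k) eqn:E.
  - apply Nat.ltb_lt in E. destruct (n =? S i) eqn:E1; destruct (n =? i) eqn:E2; auto;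
    apply Nat.eqb_eq in E1 || apply Nat.eqb_eq in E2; lia.
  - reflexivity.
Qed.

Lemma occs_fliftn_lt : forall j b i, i < j -> occs i (fliftn j b) = [].
Proof.
  induction j; intros b i H; simpl. lia.
  destruct i. apply occs_flift_eq.
  rewrite occs_flift_ge by lia. apply IHj. lia.
Qed.

Lemma occs_fliftn_ge : forall j b i, occs (j + i) (fliftn j b) = occs i b.
Proof.
  induction j; intros b i; simpl. auto.
  rewrite occs_flift_ge by lia. apply IHj.
Qed.

Lemma occs_fsubst_lt : forall a k b j, j < k -> occs j (fsubst k b a) = occs j a.
Proof.
  induction a; intros k b j H; simpl; try (rewrite ?IHa, ?IHa1, ?IHa2 by lia); auto.
  destruct (n <? k) eqn:E. reflexivity.
  apply Nat.ltb_ge in E.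
  destruct (n =? k) eqn:E1.
  - apply Nat.eqb_eq in E1. subst. rewrite occs_fliftn_lt by lia.
    destruct (k =? j) eqn:E2; auto. apply Nat.eqb_eq in E2; lia.
  - apply Nat.eqb_neq in E1. simpl.
    destruct (pred n =? j) eqn:E2; destruct (n =? j) eqn:E3; auto;
    apply Nat.eqb_eq in E2 || apply Nat.eqb_eq in E3; lia.
Qed.

Lemma map_padd00 : forall L, map (padd (0,0)) L = L.
Proof. induction L as [|[x y] L IH]; simpl; auto. rewrite IH. reflexivity. Qed.

Lemma perm_swap4 {A} (P1 Q1 P2 Q2 : list A) :
  Permutation ((P1 ++ Q1) ++ (P2 ++ Q2)) ((P1 ++ P2) ++ (Q1 ++ Q2)).
Proof.
  rewrite <- !app_assoc. apply Permutation_app_head.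
  rewrite !app_assoc. apply Permutation_app_tail. apply Permutation_app_comm.
Qed.

Lemma map_flat_map_sh (g : nat*nat -> nat*nat) Q O :
  (forall p q, g (padd p q) = padd (g p) q) ->
  map g (flat_map (fun p => map (padd p) Q) O) = flat_map (fun p => map (padd p) Q) (map g O).
Proof.
  intro Hg. induction O; simpl; auto. rewrite map_app, IHO, map_map.
  f_equal. apply map_ext. intro; apply Hg.
Qed.

Lemma occs_fsubst_ge : forall a k b i, k <= i ->
  Permutation (occs i (fsubst k b a))
    (occs (S i) a ++ flat_map (fun p => map (padd p) (occs (i - k) b)) (occs k a)).
Proof.
  induction a; intros k b i H; simpl.
  - destruct (n <? k) eqn:E.
    + apply Nat.ltb_lt in E. simpl.
      destruct (n =? i) eqn:E1; [apply Nat.eqb_eq in E1; lia|].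
      destruct (n =? S i) eqn:E2; [apply Nat.eqb_eq in E2; lia|].
      destruct (n =? k) eqn:E3; [apply Nat.eqb_eq in E3; lia|]. simpl; auto.
    + apply Nat.ltb_ge in E. destruct (n =? k) eqn:E1.
      * apply Nat.eqb_eq in E1; subst.
        destruct (k =? S i) eqn:E2; [apply Nat.eqb_eq in E2; lia|].
        simpl. rewrite app_nil_r, map_padd00.
        replace i with (k + (i - k)) at 1 by lia. rewrite occs_fliftn_ge. auto.
      * apply Nat.eqb_neq in E1. simpl.
        destruct (k =? n) eqn:E0. { apply Nat.eqb_eq in E0; lia. }
        destruct (n =? k) eqn:E0'. { apply Nat.eqb_eq in E0'; lia. }
        simpl. rewrite app_nil_r.
        destruct (pred n =? i) eqn:E2; destruct (n =? S i) eqn:E3; auto.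
        all: rewrite ?Nat.eqb_eq, ?Nat.eqb_neq in *; destruct n; simpl in *; lia.
  - rewrite flat_map_app.
    eapply perm_trans. apply Permutation_app; [apply IHa1 | apply IHa2]; auto.
    apply perm_swap4.
  - apply (IHa (S k) b (S i)). lia.
  - apply (IHa (S k) b (S i)). lia.
  - apply (IHa (S k) b (S i)). lia.
  - rewrite <- map_flat_map_sh by reflexivity. rewrite <- map_app.
    apply Permutation_map. auto.
  - rewrite <- map_flat_map_sh by reflexivity. rewrite <- map_app.
    apply Permutation_map. auto.
  - auto.
Qed.

Lemma inv_flift : forall t k, inv t -> inv (flift k t).
Proof.
  induction t; intros k H; simpl in *; try tauto;
  try (rewrite occs_flift_lt by lia); intuition.
Qed.

Lemma inv_fliftn : forall j t, inv t -> inv (fliftn j t).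
Proof. induction j; simpl; auto using inv_flift. Qed.

Lemma inv_fsubst : forall a k b, inv a -> inv b -> inv (fsubst k b a).
Proof.
  induction a; intros k b Ha Hb; simpl in *; try (rewrite occs_fsubst_lt by lia); intuition.
  destruct (n <? k); simpl; auto. destruct (n =? k); simpl; auto using inv_fliftn.
Qed.

Lemma lv_flift : forall t k, lv (flift k t) = lv t.
Proof. induction t; intros k; simpl; rewrite ?IHt, ?IHt1, ?IHt2; auto. Qed.
Lemma lv_fliftn : forall j t, lv (fliftn j t) = lv t.
Proof. induction j; intros; simpl; rewrite ?lv_flift; auto. Qed.

Lemma map_add0 : forall L, map (Nat.add 0) L = L.
Proof. induction L; simpl; f_equal; auto. Qed.

Lemma lv_split : forall t k, Permutation (lv t) (lvx k t ++ map fst (occs k t)).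
Proof.
  induction t; intros k; simpl.
  - destruct (n =? k) eqn:E. simpl. auto. simpl. auto.
  - apply perm_skip. rewrite map_app. eapply perm_trans.
    apply Permutation_app; [apply IHt1|apply IHt2]. apply perm_swap4.
  - apply perm_skip; apply IHt.
  - apply perm_skip; apply IHt.
  - apply perm_skip; apply IHt.
  - apply perm_skip. rewrite map_map. simpl.
    replace (map (fun x => S (fst x)) (occs k t)) with (map S (map fst (occs k t)))
      by (rewrite map_map; reflexivity).
    rewrite <- map_app. apply Permutation_map. apply IHt.
  - apply perm_skip. rewrite map_map. simpl. apply IHt.
  - auto.
Qed.

Lemma lv_fsubst : forall a k b,
  Permutation (lv (fsubst k b a))
    (lvx k a ++ flat_map (fun p => map (Nat.add (fst p)) (lv b)) (occs k a)).
Proof.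
  induction a; intros k b; simpl.
  - destruct (n <? k) eqn:E.
    + apply Nat.ltb_lt in E. destruct (n =? k) eqn:E1; [apply Nat.eqb_eq in E1; lia|].
      destruct (k =? n) eqn:E2; [apply Nat.eqb_eq in E2; lia|]. simpl. auto.
    + destruct (n =? k) eqn:E1.
      * apply Nat.eqb_eq in E1; subst. simpl.
        rewrite lv_fliftn, app_nil_r, map_id. auto.
      * destruct (k =? n) eqn:E2; [apply Nat.eqb_eq in E2; apply Nat.eqb_neq in E1; lia|].
        simpl. auto.
  - apply perm_skip. rewrite flat_map_app. eapply perm_trans.
    apply Permutation_app; [apply IHa1|apply IHa2]. apply perm_swap4.
  - apply perm_skip; apply IHa.
  - apply perm_skip; apply IHa.
  - apply perm_skip; apply IHa.
  - apply perm_skip.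
    assert (map S (flat_map (fun p => map (Nat.add (fst p)) (lv b)) (occs k a)) =
            flat_map (fun p => map (Nat.add (fst p)) (lv b)) (map shI (occs k a))) as <-.
    { induction (occs k a); simpl; auto. rewrite map_app, map_map, IHl. reflexivity. }
    rewrite <- map_app. apply Permutation_map. apply IHa.
  - apply perm_skip.
    assert (flat_map (fun p => map (Nat.add (fst p)) (lv b)) (occs k a) =
            flat_map (fun p => map (Nat.add (fst p)) (lv b)) (map shC (occs k a))) as <-.
    { induction (occs k a); simpl; auto. rewrite IHl. reflexivity. }
    apply IHa.
  - auto.
Qed.

Definition Dec (L' L : list nat) := exists A X Y,
  Permutation L (X ++ A) /\ Permutation L' (Y ++ A) /\ X <> [] /\
  Forall (fun y => exists x, In x X /\ y < x) Y.

Lemma Acc_perm : forall L L', Acc Dec L -> Permutation L L' -> Acc Dec L'.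
Proof.
  intros L L' [H] P. constructor. intros N [A [X [Y [H1 [H2 [H3 H4]]]]]].
  apply H. exists A, X, Y. repeat split; auto. eapply perm_trans; eauto.
Qed.

Lemma filter_perm (f : nat -> bool) : forall Y, Permutation Y (filter f Y ++ filter (fun y => negb (f y)) Y).
Proof.
  induction Y; simpl; auto. destruct (f a); simpl.
  - apply perm_skip; auto.
  - eapply perm_trans. apply perm_skip, IHY. apply Permutation_middle.
Qed.

Lemma Acc_cons : forall a M, Acc Dec M -> Acc Dec (a :: M).
Proof.
  induction a as [a IHa] using (well_founded_induction lt_wf).
  intros M HM. induction HM as [M HM IH2].
  constructor. intros N [A [X [Y [P1 [P2 [NE FY]]]]]].
  assert (Ha : In a (X ++ A)) by (eapply Permutation_in; eauto; left; auto).
  apply in_app_or in Ha as [Ha|Ha].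
  - apply in_split in Ha as [X1 [X2 ->]].
    assert (PM : Permutation M ((X1 ++ X2) ++ A)).
    { apply Permutation_cons_inv with a. eapply perm_trans. apply P1.
      rewrite <- !app_assoc. simpl. apply Permutation_sym, Permutation_middle. }
    set (Y1 := filter (fun y => y <? a) Y).
    set (Y2 := filter (fun y => negb (y <? a)) Y).
    assert (HY2 : forall y, In y Y2 -> exists x, In x (X1 ++ X2) /\ y < x).
    { intros y Hy. unfold Y2 in Hy. apply filter_In in Hy as [Hy Hy'].
      rewrite Forall_forall in FY. destruct (FY y Hy) as [x [Hx Hyx]].
      apply Bool.negb_true_iff, Nat.ltb_ge in Hy'.
      apply in_app_or in Hx as [Hx|[Hx|Hx]]; try (subst; lia);
      exists x; split; auto; apply in_or_app; auto. }
    assert (AccA : Acc Dec (Y2 ++ A)).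
    { destruct (X1 ++ X2) as [|x0 X0] eqn:EX.
      - destruct Y2 as [|y Y2'] eqn:EY2.
        + simpl. eapply Acc_perm. constructor; apply HM. simpl in PM. auto.
        + destruct (HY2 y (or_introl eq_refl)) as [x [[] _]].
      - apply HM. exists A, (x0 :: X0), Y2. repeat split; auto.
        + discriminate.
        + apply Forall_forall. auto. }
    assert (AccB : forall Z, Forall (fun y => y < a) Z -> Acc Dec (Z ++ Y2 ++ A)).
    { induction Z; intros HF; simpl; auto. inversion HF; subst. apply IHa; auto. }
    eapply Acc_perm. apply (AccB Y1).
    + apply Forall_forall. intros y Hy. unfold Y1 in Hy. apply filter_In in Hy as [_ Hy].
      apply Nat.ltb_lt; auto.
    + apply Permutation_sym. eapply perm_trans. apply P2.
      rewrite app_assoc. apply Permutation_app_tail. apply (filter_perm (fun y => y <? a)).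
  - apply in_split in Ha as [A1 [A2 ->]].
    assert (PM : Permutation M (X ++ A1 ++ A2)).
    { apply Permutation_cons_inv with a. eapply perm_trans. apply P1.
      rewrite (app_assoc X A1 (a::A2)), (app_assoc X A1 A2). apply Permutation_sym, Permutation_middle. }
    assert (D : Dec (Y ++ A1 ++ A2) M).
    { exists (A1 ++ A2), X, Y. repeat split; auto. }
    eapply Acc_perm. apply (IH2 _ D).
    apply Permutation_sym. eapply perm_trans. apply P2.
    rewrite (app_assoc Y A1 (a::A2)), (app_assoc Y A1 A2). apply Permutation_sym. apply Permutation_middle.
Qed.

Lemma Acc_all : forall L, Acc Dec L.
Proof.
  induction L.
  - constructor. intros N [A [X [Y [P1 [P2 [NE FY]]]]]].
    apply Permutation_nil in P1. destruct X; [contradiction|discriminate].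
  - apply Acc_cons; auto.
Qed.

Definition Base (L' L : list (nat*nat)) := exists A B Z,
  Permutation L (A ++ B) /\ Permutation L' (A ++ Z) /\
  (Z = [] \/ Z = B \/ exists B', B = map shI B' /\ forall z, In z Z -> In z B').

Lemma Base_app_l C L' L : Base L' L -> Base (C ++ L') (C ++ L).
Proof.
  intros [A [B [Z [P1 [P2 H]]]]]. exists (C ++ A), B, Z.
  rewrite <- !app_assoc. repeat split; auto using Permutation_app_head.
Qed.

Lemma Base_app_r C L' L : Base L' L -> Base (L' ++ C) (L ++ C).
Proof.
  intros [A [B [Z [P1 [P2 H]]]]]. exists (C ++ A), B, Z.
  rewrite <- !app_assoc. repeat split; auto.
  - eapply perm_trans. apply Permutation_app_comm. apply Permutation_app_head; auto.
  - eapply perm_trans. apply Permutation_app_comm. apply Permutation_app_head; auto.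
Qed.

Lemma Base_map (g : nat*nat -> nat*nat) L' L :
  (forall p, g (shI p) = shI (g p)) -> Base L' L -> Base (map g L') (map g L).
Proof.
  intros Hg [A [B [Z [P1 [P2 H]]]]]. exists (map g A), (map g B), (map g Z).
  rewrite <- !map_app. repeat split; auto using Permutation_map.
  destruct H as [->|[->|[B' [-> HB]]]]; auto.
  right; right. exists (map g B'). split.
  - rewrite !map_map. apply map_ext. auto.
  - intros z Hz. apply in_map_iff in Hz as [z0 [<- Hz0]]. apply in_map; auto.
Qed.

Lemma Forall_perm {T} (P : T -> Prop) L L' : Permutation L L' -> Forall P L -> Forall P L'.
Proof.
  intros HP HF. rewrite Forall_forall in *. intros x Hx. apply HF.
  eapply Permutation_in; [apply Permutation_sym|]; eauto.
Qed.

Lemma Base_inv3 L' L : Base L' L ->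
  (okLin L -> okLin L') /\ (okHash L \/ okInd L -> okHash L' \/ okInd L') /\
  (okC L -> okC L').
Proof.
  intros [A [B [Z [P1 [P2 H]]]]].
  unfold okLin, okHash, okInd, okC.
  assert (LL : length L = length A + length B)
    by (rewrite (Permutation_length P1), length_app; auto).
  assert (FL : forall (P : nat*nat -> Prop), Forall P L -> Forall P A /\ Forall P B).
  { intros P HF. apply (Forall_perm _ _ _ P1) in HF. apply Forall_app in HF. auto. }
  assert (FL' : forall (P : nat*nat -> Prop), Forall P A -> Forall P Z -> Forall P L').
  { intros P HA HZ. apply (Forall_perm _ (A ++ Z)). apply Permutation_sym; auto.
    apply Forall_app; auto. }
  assert (LL' : length L' = length A + length Z)
    by (rewrite (Permutation_length P2), length_app; auto).
  destruct H as [->|[->|[B' [-> HB]]]].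
  - simpl in LL'.
    refine (conj _ (conj _ _)).
    + intros [H1 H2]. split. lia. destruct (FL _ H2). apply FL'; auto.
    + intros [H|[H1 H2]].
      * left. destruct (FL _ H). apply FL'; auto.
      * right. split. lia. destruct (FL _ H2). apply FL'; auto.
    + intros H. destruct (FL _ H). apply FL'; auto.
  - refine (conj _ (conj _ _)).
    + intros [H1 H2]. split. lia. destruct (FL _ H2). apply FL'; auto.
    + intros [H|[H1 H2]].
      * left. destruct (FL _ H). apply FL'; auto.
      * right. split. lia. destruct (FL _ H2). apply FL'; auto.
    + intros H. destruct (FL _ H). apply FL'; auto.
  -
    assert (Zsub : forall (P : nat*nat -> Prop), Forall (fun b => P (shI b)) B' ->
              (forall z, In z B' -> P (shI z) -> P z) -> Forall P Z).
    { intros P HF HPP. rewrite Forall_forall in *. intros z Hz. apply HPP; auto. }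
    rewrite length_map in LL.
    refine (conj _ (conj _ _)).
    + destruct 1 as [H1 H2]. destruct B' as [|b B''].
      * assert (Z = []) as -> by (destruct Z as [|z]; auto; destruct (HB z (or_introl eq_refl))).
        destruct (FL _ H2) as [HA _]. simpl in LL'. split; [lia| apply FL'; auto].
      * destruct (FL _ H2) as [_ HB2]. inversion HB2. discriminate.
    + intros [H|[H1 H2]].
      * destruct B' as [|b B''].
        { assert (Z = []) as -> by (destruct Z as [|z]; auto; destruct (HB z (or_introl eq_refl))).
          left. destruct (FL _ H) as [HA _]. apply FL'; auto. }
        { destruct (FL _ H) as [_ HB2]. inversion HB2. discriminate. }
      * destruct B' as [|b B''].
        { assert (Z = []) as -> by (destruct Z as [|z]; auto; destruct (HB z (or_introl eq_refl))).
          right. split; [lia|]. destruct (FL _ H2) as [HA _]. apply FL'; auto. }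
        { left. simpl in LL. assert (A = []) by (destruct A; auto; simpl in LL; lia). subst A.
          destruct (FL _ H2) as [_ HB2]. apply FL'; auto.
          rewrite Forall_forall in *. intros z Hz. apply HB in Hz.
          specialize (HB2 (shI z) (in_map _ _ _ Hz)). unfold shI in HB2.
          destruct z; simpl in *. inversion HB2. auto. }
    + intros H. destruct (FL _ H) as [HA HB2]. apply FL'; auto.
      rewrite Forall_forall in *. intros z Hz. apply HB in Hz.
      specialize (HB2 (shI z) (in_map _ _ _ Hz)). auto.
Qed.

Lemma flat_map_nil {T U} (L : list T) : flat_map (fun _ => @nil U) L = [].
Proof. induction L; auto. Qed.

Lemma okLin_cases L : okLin L -> L = [] \/ L = [(0,0)].
Proof.
  intros [H1 H2]. destruct L as [|p [|q L]]; auto. inversion H2; subst; auto.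
  simpl in H1; lia.
Qed.
Lemma okInd_cases L : okInd L -> L = [] \/ L = [(1,0)].
Proof.
  intros [H1 H2]. destruct L as [|p [|q L]]; auto. inversion H2; subst; auto.
  simpl in H1; lia.
Qed.

Lemma fstep_inv : forall t t', fstep t t' -> inv t ->
  inv t' /\ forall i, Base (occs i t') (occs i t).
Proof.
  induction 1; intros Hi; simpl in Hi.
  - destruct Hi as [[Ho Ha] Hb]. split. apply inv_fsubst; auto.
    intros i. simpl. exists (occs (S i) a), (occs i b),
      (flat_map (fun p => map (padd p) (occs i b)) (occs 0 a)).
    repeat split; auto.
    + pose proof (occs_fsubst_ge a 0 b i (Nat.le_0_l _)) as P. rewrite Nat.sub_0_r in P. exact P.
    + apply okLin_cases in Ho as [->| ->]; simpl; auto.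
      right; left. rewrite app_nil_r, map_padd00. auto.
  - destruct Hi as [[Ho Ha] Hb]. split. apply inv_fsubst; auto.
    intros i. simpl. exists (occs (S i) a), (map shI (occs i b)),
      (flat_map (fun p => map (padd p) (occs i b)) (occs 0 a)).
    repeat split; auto.
    + pose proof (occs_fsubst_ge a 0 b i (Nat.le_0_l _)) as P. rewrite Nat.sub_0_r in P. exact P.
    + destruct Ho as [Ho|Ho].
      * right; right. exists (occs i b). split; auto.
        intros z Hz. apply in_flat_map in Hz as [p [Hp Hz]].
        unfold okHash in Ho. rewrite Forall_forall in Ho. rewrite (Ho p Hp), map_padd00 in Hz. auto.
      * apply okInd_cases in Ho as [->| ->]; simpl; auto.
        right; left. rewrite app_nil_r. apply map_ext. reflexivity.
  - destruct Hi as [[Ho Ha] _]. split. apply inv_fsubst; simpl; auto.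
    intros i. simpl. exists (occs (S i) a), [], [].
    repeat split; auto.
    pose proof (occs_fsubst_ge a 0 FCut i (Nat.le_0_l _)) as P. simpl in P.
    rewrite flat_map_nil in P. exact P.
  - destruct Hi as [Ha Hb]. destruct (IHfstep Ha) as [Ha' HB].
    split. simpl; auto. intros i; simpl. apply Base_app_r; auto.
  - destruct Hi as [Ha Hb]. destruct (IHfstep Hb) as [Hb' HB].
    split. simpl; auto. intros i; simpl. apply Base_app_l; auto.
  - destruct Hi as [Ho Ha]. destruct (IHfstep Ha) as [Ha' HB].
    split. simpl; split; auto. apply (Base_inv3 _ _ (HB 0)); auto.
    intros i; simpl; auto.
  - destruct Hi as [Ho Ha]. destruct (IHfstep Ha) as [Ha' HB].
    split. simpl; split; auto. apply (Base_inv3 _ _ (HB 0)); auto.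
    intros i; simpl; auto.
  - destruct Hi as [Ho Ha]. destruct (IHfstep Ha) as [Ha' HB].
    split. simpl; split; auto. apply (Base_inv3 _ _ (HB 0)); auto.
    intros i; simpl; auto.
  - destruct (IHfstep Hi) as [Ha' HB]. split; simpl; auto.
    intros i. apply Base_map; auto.
  - destruct (IHfstep Hi) as [Ha' HB]. split; simpl; auto.
    intros i. apply Base_map; auto.
Qed.

Lemma Dec_app_l C L' L : Dec L' L -> Dec (C ++ L') (C ++ L).
Proof.
  intros [A [X [Y [P1 [P2 [NE FY]]]]]]. exists (C ++ A), X, Y. repeat split; auto.
  - eapply perm_trans. apply Permutation_app_head, P1.
    rewrite !app_assoc. apply Permutation_app_tail, Permutation_app_comm.
  - eapply perm_trans. apply Permutation_app_head, P2.
    rewrite !app_assoc. apply Permutation_app_tail, Permutation_app_comm.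
Qed.

Lemma Dec_app_r C L' L : Dec L' L -> Dec (L' ++ C) (L ++ C).
Proof.
  intros [A [X [Y [P1 [P2 [NE FY]]]]]]. exists (A ++ C), X, Y. repeat split; auto.
  - rewrite app_assoc. apply Permutation_app_tail, P1.
  - rewrite app_assoc. apply Permutation_app_tail, P2.
Qed.

Lemma Dec_cons x L' L : Dec L' L -> Dec (x :: L') (x :: L).
Proof. apply (Dec_app_l [x]). Qed.

Lemma Dec_mapS L' L : Dec L' L -> Dec (map S L') (map S L).
Proof.
  intros [A [X [Y [P1 [P2 [NE FY]]]]]]. exists (map S A), (map S X), (map S Y).
  rewrite <- !map_app. repeat split; auto using Permutation_map.
  - destruct X; simpl; congruence.
  - rewrite Forall_forall in *. intros y Hy. apply in_map_iff in Hy as [y0 [<- Hy0]].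
    destruct (FY y0 Hy0) as [x [Hx Hlt]]. exists (S x). split. apply in_map; auto. lia.
Qed.

Lemma Dec_mk L' L A X Y : Permutation L (X ++ A) -> Permutation L' (Y ++ A) -> X <> [] ->
  (forall y, In y Y -> exists x, In x X /\ y < x) -> Dec L' L.
Proof. intros. exists A, X, Y. repeat split; auto. apply Forall_forall; auto. Qed.

Lemma fstep_dec : forall t t', fstep t t' -> inv t -> Dec (lv t') (lv t).
Proof.
  induction 1; intros Hi; simpl in Hi.
  - destruct Hi as [[Ho Ha] Hb].
    pose proof (lv_split a 0) as S1. pose proof (lv_fsubst a 0 b) as S2.
    simpl lv.
    apply okLin_cases in Ho as [Ho|Ho]; rewrite Ho in S1, S2; simpl in S1, S2.
    + apply (Dec_mk _ _ (lvx 0 a) (0 :: 0 :: lv b) []); auto; try discriminate.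
      * do 2 apply perm_skip. eapply perm_trans. apply Permutation_app_tail, S1.
        rewrite app_nil_r. apply Permutation_app_comm.
      * rewrite app_nil_r in S2. auto.
      * intros y [].
    + rewrite app_nil_r, map_id in S2.
      apply (Dec_mk _ _ (lvx 0 a ++ lv b) [0;0;0] []); auto; try discriminate.
      * simpl. do 2 apply perm_skip. eapply perm_trans. apply Permutation_app_tail, S1.
        rewrite <- app_assoc. apply Permutation_sym, Permutation_middle.
      * intros y [].
  - destruct Hi as [[Ho Ha] Hb].
    pose proof (lv_split a 0) as S1. pose proof (lv_fsubst a 0 b) as S2.
    simpl lv. destruct Ho as [Ho|Ho].
    + set (O := occs 0 a) in *.
      apply (Dec_mk _ _ (lvx 0 a) (0 :: 0 :: map fst O ++ 0 :: map S (lv b))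
               (flat_map (fun p => map (Nat.add (fst p)) (lv b)) O)); auto; try discriminate.
      * do 2 apply perm_skip. eapply perm_trans. apply Permutation_app_tail, S1.
        rewrite <- app_assoc. apply Permutation_app_comm.
      * eapply perm_trans; [apply S2|apply Permutation_app_comm].
      * intros y Hy. apply in_flat_map in Hy as [p [Hp Hy]].
        unfold okHash in Ho. rewrite Forall_forall in Ho. rewrite (Ho p Hp) in Hy.
        simpl in Hy. rewrite map_id in Hy.
        exists (S y). split; [|lia]. right. right. apply in_or_app. right. right.
        apply in_map; auto.
    + apply okInd_cases in Ho as [Ho|Ho]; rewrite Ho in S1, S2; simpl in S1, S2.
      * apply (Dec_mk _ _ (lvx 0 a) (0 :: 0 :: 0 :: map S (lv b)) []); auto; try discriminate.
        -- do 2 apply perm_skip. eapply perm_trans. apply Permutation_app_tail, S1.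
           rewrite app_nil_r. apply Permutation_app_comm.
        -- rewrite app_nil_r in S2. auto.
        -- intros y [].
      * rewrite app_nil_r in S2.
        apply (Dec_mk _ _ (lvx 0 a ++ map S (lv b)) [0;0;0;1] []); auto; try discriminate.
        -- simpl. do 2 apply perm_skip. eapply perm_trans. apply Permutation_app_tail, S1.
           apply Permutation_count_occ with (eq_dec := Nat.eq_dec). intros z.
           simpl. rewrite !count_occ_app. simpl.
           destruct z as [|[|z]]; simpl; lia.
        -- intros y [].
  - destruct Hi as [[Ho Ha] _].
    pose proof (lv_split a 0) as S1. pose proof (lv_fsubst a 0 FCut) as S2.
    simpl lv. simpl in S2.
    assert (E : Permutation (flat_map (fun p => [fst p + 0]) (occs 0 a)) (map fst (occs 0 a))).
    { clear. induction (occs 0 a); simpl; auto. rewrite Nat.add_0_r. auto. }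
    apply (Dec_mk _ _ (lv a) [0;0;0] []); auto; try discriminate.
    + simpl. do 2 apply perm_skip. apply Permutation_sym, Permutation_cons_append.
    + simpl. eapply perm_trans. apply S2. eapply perm_trans. apply Permutation_app_head, E.
      apply Permutation_sym, S1.
    + intros y [].
  - destruct Hi. simpl. apply Dec_cons, Dec_app_r; auto.
  - destruct Hi. simpl. apply Dec_cons, Dec_app_l; auto.
  - destruct Hi. simpl. apply Dec_cons; auto.
  - destruct Hi. simpl. apply Dec_cons; auto.
  - destruct Hi. simpl. apply Dec_cons; auto.
  - simpl. apply Dec_cons, Dec_mapS; auto.
  - simpl. apply Dec_cons; auto.
Qed.

Inductive tr : nat -> term -> fterm -> Prop :=
| tr_var m x : tr m (Var x) (FVar x)
| tr_app m M N a b : tr m M a -> tr m N b -> tr m (App M N) (FApp a b)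
| tr_lam m M a : tr m M a -> tr m (Lam M) (FLam a)
| tr_lamI m M a : tr m M a -> tr m (LamI M) (FLamI a)
| tr_lamC m M a : tr m M a -> tr m (LamC M) (FLamC a)
| tr_boxI m M a : tr m M a -> tr m (BoxI M) (FBoxI a)
| tr_boxC m M a : tr m M a -> tr (S m) (BoxC M) (FBoxC a)
| tr_cut M : tr 0 (BoxC M) FCut.

Definition frob (t : term) : term :=
  match t with
  | Var n => Var n | App a b => App a b | Lam a => Lam a | LamI a => LamI a
  | LamC a => LamC a | BoxI a => BoxI a | BoxC a => BoxC a end.
Lemma frob_eq t : t = frob t. Proof. destruct t; reflexivity. Qed.

Lemma tr_bisim : forall m M t, tr m M t -> forall M', bisim M M' -> tr m M' t.
Proof.
  induction 1; intros M' HB; inversion HB; subst; constructor; auto.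
Qed.
Lemma tr_bisim_r : forall m M t, tr m M t -> forall M', bisim M' M -> tr m M' t.
Proof.
  induction 1; intros M' HB; inversion HB; subst; constructor; auto.
Qed.

Lemma tr_lift : forall m M t, tr m M t -> forall k, tr m (lift k M) (flift k t).
Proof.
  induction 1; intros k; rewrite (frob_eq (lift _ _)); simpl; constructor; auto.
Qed.

Lemma tr_liftn : forall j m N b, tr m N b -> tr m (liftn j N) (fliftn j b).
Proof. induction j; intros; simpl; auto. apply tr_lift; auto. Qed.

Lemma ne_app_l {T} (l1 l2 : list T) : l1 <> [] -> l1 ++ l2 <> [].
Proof. destruct l1; simpl; congruence. Qed.
Lemma ne_app_r {T} (l1 l2 : list T) : l2 <> [] -> l1 ++ l2 <> [].
Proof. destruct l1; simpl; congruence. Qed.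
Lemma ne_map {T U} (f : T -> U) l : l <> [] -> map f l <> [].
Proof. destruct l; simpl; congruence. Qed.

Lemma tr_subst : forall m M a, tr m M a -> m = 0 -> forall k N b,
  (occs k a <> [] -> tr 0 N b) -> tr 0 (subst k N M) (fsubst k b a).
Proof.
  induction 1; intros Hm k N0 b0 Hocc; subst; try discriminate;
    rewrite (frob_eq (subst _ _ _)); simpl.
  - destruct (x <? k) eqn:E1. constructor.
    destruct (x =? k) eqn:E2.
    + change (tr 0 (frob (liftn k N0)) (fliftn k b0)). rewrite <- frob_eq. apply tr_liftn. apply Hocc. simpl. rewrite E2. discriminate.
    + constructor.
  - constructor; [apply IHtr1|apply IHtr2]; auto; intros H1; apply Hocc; simpl;
      auto using ne_app_l, ne_app_r.
  - constructor; apply IHtr; auto.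
  - constructor; apply IHtr; auto.
  - constructor; apply IHtr; auto.
  - constructor; apply IHtr; auto. intro H1; apply Hocc; simpl; apply ne_map; auto.
  - constructor.
Qed.

Lemma tr0_noC : forall m M t, tr m M t -> m = 0 -> forall i p, In p (occs i t) -> snd p = 0.
Proof.
  induction 1; intros Hm i p Hp; subst; simpl in *; try discriminate; try tauto.
  - destruct (x =? i); simpl in Hp; [destruct Hp as [<-|[]]|]; auto; tauto.
  - apply in_app_or in Hp as [Hp|Hp]; eauto.
  - eauto.
  - eauto.
  - eauto.
  - apply in_map_iff in Hp as [q [<- Hq]]. simpl. eauto.
Qed.

Ltac inv_tr := repeat match goal with
 | H : tr _ (App _ _) ?t |- _ => is_var t; inversion H; subst; clear H
 | H : tr _ (Lam _) ?t |- _ => is_var t; inversion H; subst; clear H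
 | H : tr _ (LamI _) ?t |- _ => is_var t; inversion H; subst; clear H
 | H : tr _ (LamC _) ?t |- _ => is_var t; inversion H; subst; clear H
 | H : tr _ (BoxI _) ?t |- _ => is_var t; inversion H; subst; clear H
 | H : tr _ (BoxC _) ?t |- _ => is_var t; inversion H; subst; clear H
 end.

Lemma tr_step : forall n M M', step n M M' -> forall t, tr n M t -> inv t ->
  exists t', tr n M' t' /\ fstep t t'.
Proof.
  induction 1; intros t Ht Hi; inv_tr; simpl in Hi.
  - eexists. split; [|constructor].
    eapply tr_bisim_r; [|exact H]. eapply tr_subst; eauto.
  - eexists. split; [|constructor].
    eapply tr_bisim_r; [|exact H]. eapply tr_subst; eauto.
  - eexists. split; [|constructor].
    eapply tr_bisim_r; [|exact H]. eapply tr_subst; eauto.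
    intros Hne. exfalso. destruct Hi as [[Ho _] _].
    match goal with H2 : tr 0 M ?a0 |- _ =>
      destruct (occs 0 a0) as [|p O] eqn:EO; [contradiction|];
      inversion Ho; subst;
      pose proof (tr0_noC _ _ _ H2 eq_refl 0 p) as Hp end.
    rewrite EO in Hp. specialize (Hp (or_introl eq_refl)). lia.
  - destruct (IHstep _ ltac:(eassumption) (proj1 Hi)) as [a' [Ha' Hs]].
    exists (FApp a' b). split. constructor; [exact Ha'|]. eapply tr_bisim; eauto. constructor; eauto.
  - destruct (IHstep _ ltac:(eassumption) (proj2 Hi)) as [b' [Hb' Hs]].
    exists (FApp a b'). split. constructor; [|exact Hb']. eapply tr_bisim; eauto. constructor; eauto.
  - destruct (IHstep _ ltac:(eassumption) (proj2 Hi)) as [a' [Ha' Hs]].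
    eexists. split; constructor; eauto.
  - destruct (IHstep _ ltac:(eassumption) (proj2 Hi)) as [a' [Ha' Hs]].
    eexists. split; constructor; eauto.
  - destruct (IHstep _ ltac:(eassumption) (proj2 Hi)) as [a' [Ha' Hs]].
    eexists. split; constructor; eauto.
  - destruct (IHstep _ ltac:(eassumption) Hi) as [a' [Ha' Hs]].
    eexists. split; constructor; eauto.
  - destruct (IHstep _ ltac:(eassumption) Hi) as [a' [Ha' Hs]].
    eexists. split; constructor; eauto.
Qed.

Definition ok_kind (o : option kind) (L : list (nat*nat)) : Prop :=
  match o with
  | None => L = []
  | Some KLin => okLin L
  | Some KHash => okHash L
  | Some KInd => okInd L
  | Some KCoind => okC L
  | Some KDag => True
  end.
Definition env_ok (G : env) (t : fterm) := forall i, ok_kind (get G i) (occs i t).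

Lemma ok_nil o : ok_kind o [].
Proof. destruct o as [[]|]; simpl; unfold okLin, okHash, okInd, okC; auto. Qed.

Lemma get_map (f : option kind -> option kind) G i :
  f None = None -> get (map f G) i = f (get G i).
Proof.
  intros H. unfold get. revert i. induction G; intros [|i]; simpl; auto.
Qed.

Lemma typed_gen m
  (Hbox : forall G M, der G M -> m <> 0 -> exists t, tr (pred m) M t /\ env_ok G t /\ inv t) :
  forall G M, der_ind der G M -> exists t, tr m M t /\ env_ok G t /\ inv t.
Proof.
  induction 1.
  - exists (FVar x). split; [constructor|]. split; [|simpl; auto].
    intros i. simpl. destruct (x =? i) eqn:E.
    + apply Nat.eqb_eq in E; subst.
      destruct H as [H|[H|H]]; rewrite H; simpl; unfold okLin, okHash; auto.
    + apply ok_nil.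
  - destruct IHder_ind1 as [a [Ha [Ea Ia]]]. destruct IHder_ind2 as [b [Hb [Eb Ib]]].
    exists (FApp a b). split; [constructor; auto|]. split; [|simpl; auto].
    intros i. simpl. specialize (H i). specialize (Ea i). specialize (Eb i).
    unfold split_opt in H. destruct (get G i) as [[]|]; simpl in *.
    + destruct H as [[J1 J2]|[J1 J2]]; rewrite J1 in Ea; rewrite J2 in Eb; simpl in *; try rewrite Ea; try rewrite Eb;
      rewrite ?app_nil_r; auto.
    + destruct H as [[J1 J2]|[J1 J2]]; rewrite J1 in Ea; rewrite J2 in Eb; simpl in *; try rewrite Ea; try rewrite Eb;
      rewrite ?app_nil_r; auto.
    + destruct H as [J1 J2]; rewrite J1 in Ea; rewrite J2 in Eb; simpl in *.
      apply Forall_app; auto.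
    + destruct H as [J1 J2]; rewrite J1 in Ea; rewrite J2 in Eb; simpl in *.
      apply Forall_app; auto.
    + auto.
    + destruct H as [J1 J2]; rewrite J1 in Ea; rewrite J2 in Eb; simpl in *. rewrite Ea, Eb. auto.
  - destruct IHder_ind as [a [Ha [Ea Ia]]].
    exists (FLam a). split; [constructor; auto|]. split.
    + intros i. exact (Ea (S i)).
    + simpl. split; auto. exact (Ea 0).
  - destruct IHder_ind as [a [Ha [Ea Ia]]].
    exists (FLamI a). split; [constructor; auto|]. split.
    + intros i. exact (Ea (S i)).
    + simpl. split; auto. left. exact (Ea 0).
  - destruct IHder_ind as [a [Ha [Ea Ia]]].
    exists (FLamI a). split; [constructor; auto|]. split.
    + intros i. exact (Ea (S i)).
    + simpl. split; auto. right. exact (Ea 0).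
  - destruct IHder_ind as [a [Ha [Ea Ia]]].
    exists (FLamC a). split; [constructor; auto|]. split.
    + intros i. exact (Ea (S i)).
    + simpl. split; auto. exact (Ea 0).
  - destruct IHder_ind as [a [Ha [Ea Ia]]].
    exists (FBoxI a). split; [constructor; auto|]. split; [|simpl; auto].
    intros i. specialize (Ea i). rewrite get_map in Ea by reflexivity. specialize (H i).
    simpl. destruct (get G i) as [[]|]; simpl in *.
    + contradiction.
    + destruct Ea as [E1 E2]. split. rewrite length_map; auto.
      rewrite Forall_forall in *. intros p Hp. apply in_map_iff in Hp as [q [<- Hq]].
      rewrite (E2 q Hq). reflexivity.
    + unfold okC in *. rewrite Forall_forall in *. intros p Hp.
      apply in_map_iff in Hp as [q [<- Hq]]. simpl. auto.
    + rewrite Ea. simpl. constructor.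
    + auto.
    + rewrite Ea. reflexivity.
  - destruct m as [|m].
    + exists FCut. split; [constructor|]. split; [|simpl; auto]. intros i. apply ok_nil.
    + destruct (Hbox _ _ H0 ltac:(discriminate)) as [a [Ha [Ea Ia]]].
      exists (FBoxC a). split; [constructor; auto|]. split; [|simpl; auto].
      intros i. specialize (Ea i). rewrite get_map in Ea by reflexivity. specialize (H i).
      simpl. unfold shared in H.
      destruct H as [H|[H|[H|H]]]; rewrite H in *; simpl in *.
      * rewrite Ea; reflexivity.
      * rewrite Ea; constructor.
      * unfold okC. rewrite Forall_forall. intros p Hp.
        apply in_map_iff in Hp as [q [<- Hq]]. simpl. lia.
      * auto.
Qed.

Lemma typed_tr : forall m G M, der G M -> exists t, tr m M t /\ env_ok G t /\ inv t.
Proof.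
  induction m; intros G M [G' M' HD]; apply typed_gen; auto.
  - intros; contradiction.
Qed.

Theorem mainTheorem14 (n : nat) (f : nat -> term) :
  is_term (f 0) -> ~ (forall i, step n (f i) (f (S i))).
Proof.
  intros [G HG] Hall.
  destruct (typed_tr n G (f 0) HG) as [t0 [Htr [_ Hinv]]].
  assert (main : forall L, Acc Dec L -> forall t i, lv t = L -> tr n (f i) t -> inv t -> False).
  { induction 1 as [L _ IH]; intros t i HL Ht Hi; subst.
    destruct (tr_step _ _ _ (Hall i) t Ht Hi) as [t' [Ht' Hs]].
    apply (IH (lv t') (fstep_dec _ _ Hs Hi) t' (S i) eq_refl Ht' (proj1 (fstep_inv _ _ Hs Hi))). }
  exact (main (lv t0) (Acc_all _) t0 0 eq_refl Htr Hinv).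
Qed.
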